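(* Let $G$ be a group acting without inversions on a tree $T$ and let $H$ be a subgroup of $G$ acting freely on the edges of $T$. If $K_{T}(H)<\infty$, then $H$ is tame.
   Context: An element is hyperbolic if it fixes no vertex of $T$. If $H$ contains a hyperbolic element, $T_H$ is the unique minimal $H$-invariant subtree of $T$. $H$ is tame if either $H$ fixes a vertex of $T$, or $H$ contains a hyperbolic element and $T_H/H$ is finite. A vertex $v$ of $T$ is $H$-degenerate if $H_v=H_e$ for some edge $e$ with initial vertex $v$; the vertex $[v]_H$ of $T/H$ is then degenerate. For $H$ acting freely on edges, the Kurosh rank is $K_T(H)=r(T/H)+|V_{ndeg}(T/H)|$ if $H$ contains a hyperbolic element, where $r(T/H)$ is the rank of the fundamental group of $T/H$ and $V_{ndeg}(T/H)$ the set of non-degenerate vertices of $T/H$, and $K_T(H)=1$ otherwise. *)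

(* Defs.v *)
From Stdlib Require Import List.
Set Implicit Arguments.
Unset Strict Implicit.

Record graph := Graph {
  vert : Type;
  edge : Type;
  src : edge -> vert;
  rev : edge -> edge }.

Definition tgt (X : graph) (e : edge X) : vert X := src (rev e).

Definition serre (X : graph) : Prop :=
  (forall e : edge X, rev (rev e) = e) /\ (forall e : edge X, rev e <> e).

Definition subgraph (X : graph) (PV : vert X -> Prop) (PE : edge X -> Prop) : Prop :=
  forall e, PE e -> PV (src e) /\ PE (rev e).

Fixpoint path_in (X : graph) (PE : edge X -> Prop) (u v : vert X) (p : list (edge X))
  : Prop :=
  match p with
  | nil => u = v
  | e :: q => PE e /\ src e = u /\ path_in PE (tgt e) v q
  end.

Fixpoint reduced (X : graph) (p : list (edge X)) : Prop :=
  match p with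
  | e :: ((f :: _) as q) => f <> rev e /\ reduced q
  | _ => True
  end.

Definition connected_sub (X : graph) (PV : vert X -> Prop) (PE : edge X -> Prop) : Prop :=
  forall u v, PV u -> PV v -> exists p, path_in PE u v p.

Definition no_circuit (X : graph) (PE : edge X -> Prop) : Prop :=
  forall v p, p <> nil -> path_in PE v v p -> ~ reduced p.

Definition subtree (X : graph) (PV : vert X -> Prop) (PE : edge X -> Prop) : Prop :=
  subgraph PV PE /\ (exists v, PV v) /\ connected_sub PV PE /\ no_circuit PE.

Definition is_tree (X : graph) : Prop :=
  serre X /\ subtree (fun _ : vert X => True) (fun _ : edge X => True).

Definition fin_set (A : Type) (P : A -> Prop) : Prop :=
  exists l : list A, forall x, P x -> In x l.

Definition maximal_subtree (X : graph) (PV : vert X -> Prop) (PE : edge X -> Prop)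
  (SV : vert X -> Prop) (SE : edge X -> Prop) : Prop :=
  subtree SV SE /\ (forall v, SV v -> PV v) /\ (forall e, SE e -> PE e) /\
  (forall SV' SE', subtree SV' SE' -> (forall v, SV' v -> PV v) ->
     (forall e, SE' e -> PE e) ->
     (forall v, SV v -> SV' v) -> (forall e, SE e -> SE' e) ->
     (forall v, SV' v -> SV v) /\ (forall e, SE' e -> SE e)).

(* The rank of the fundamental group of the connected graph (PV,PE) is the number
   of geometric edges outside a maximal subtree; "finite rank" means this set is
   finite (for some, equivalently every, maximal subtree). *)
Definition pi1_rank_finite (X : graph) (PV : vert X -> Prop) (PE : edge X -> Prop)
  : Prop :=
  exists SV SE, maximal_subtree PV PE SV SE /\
    fin_set (fun e => PE e /\ ~ SE e).

Record group := Group {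
  gcar :> Type;
  gmul : gcar -> gcar -> gcar;
  ginv : gcar -> gcar;
  gone : gcar;
  gmulA : forall x y z, gmul x (gmul y z) = gmul (gmul x y) z;
  gmul1 : forall x, gmul gone x = x;
  gmulV : forall x, gmul (ginv x) x = gone }.

Definition subgroup (G : group) (H : G -> Prop) : Prop :=
  H (@gone G) /\ (forall x y, H x -> H y -> H (@gmul G x y)) /\
  (forall x, H x -> H (@ginv G x)).

Record action (G : group) (T : graph) := Action {
  actV : G -> vert T -> vert T;
  actE : G -> edge T -> edge T;
  actV1 : forall v, actV (@gone G) v = v;
  actVM : forall g h v, actV (@gmul G g h) v = actV g (actV h v);
  actE1 : forall e, actE (@gone G) e = e;
  actEM : forall g h e, actE (@gmul G g h) e = actE g (actE h e);
  act_src : forall g e, src (actE g e) = actV g (src e);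
  act_rev : forall g e, rev (actE g e) = actE g (rev e) }.

Section ActionDefs.
Variables (G : group) (T : graph) (A : action G T).

Definition without_inversions : Prop :=
  forall g e, actE A g e <> rev e.

Definition acts_freely_on_edges (H : G -> Prop) : Prop :=
  forall h e, H h -> actE A h e = e -> h = gone G.

Definition hyperbolic (g : G) : Prop := forall v, actV A g v <> v.

Definition fixes_vertex (H : G -> Prop) : Prop :=
  exists v, forall h, H h -> actV A h v = v.

Definition orbitV (H : G -> Prop) (v : vert T) : vert T -> Prop :=
  fun w => exists h, H h /\ actV A h v = w.
Definition orbitE (H : G -> Prop) (e : edge T) : edge T -> Prop :=
  fun f => exists h, H h /\ actE A h e = f.

(** The quotient graph T/H: vertices are H-orbits of vertices, edges are
    H-orbits of edges.  It is realised as the subgraph (QV, QE) of the graph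
    whose vertices/edges are arbitrary sets of vertices/edges of T. *)
Definition quot_graph (H : G -> Prop) : graph :=
  @Graph (vert T -> Prop) (edge T -> Prop)
    (fun X => fun w => exists e, X e /\ orbitV H (src e) w)
    (fun X => fun f => X (rev f)).

Definition QV (H : G -> Prop) : vert (quot_graph H) -> Prop :=
  fun X => exists v, X = orbitV H v.
Definition QE (H : G -> Prop) : edge (quot_graph H) -> Prop :=
  fun X => exists e, X = orbitE H e.

Definition H_degenerate (H : G -> Prop) (v : vert T) : Prop :=
  exists e, src e = v /\
    (forall h, H h -> (actV A h v = v <-> actE A h e = e)).

Definition quot_degenerate (H : G -> Prop) (X : vert (quot_graph H)) : Prop :=
  exists v, X = orbitV H v /\ H_degenerate H v.

(** K_T(H) < oo.  K_T(H) = r(T/H) + |V_ndeg(T/H)| if H contains a hyperbolic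
    element, and K_T(H) = 1 otherwise. *)
Definition Kurosh_rank_finite (H : G -> Prop) : Prop :=
  (exists h, H h /\ hyperbolic h) ->
  pi1_rank_finite (@QV H) (@QE H) /\
  fin_set (fun X => @QV H X /\ ~ @quot_degenerate H X).

Definition H_inv_subtree (H : G -> Prop) (SV : vert T -> Prop) (SE : edge T -> Prop)
  : Prop :=
  subtree SV SE /\ (forall h v, H h -> SV v -> SV (actV A h v)) /\
  (forall h e, H h -> SE e -> SE (actE A h e)).

Definition minimal_H_subtree (H : G -> Prop) (SV : vert T -> Prop) (SE : edge T -> Prop)
  : Prop :=
  H_inv_subtree H SV SE /\
  (forall SV' SE', H_inv_subtree H SV' SE' ->
     (forall v, SV' v -> SV v) -> (forall e, SE' e -> SE e) ->
     (forall v, SV v -> SV' v) /\ (forall e, SE e -> SE' e)).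

Definition finite_quotient (H : G -> Prop) (SV : vert T -> Prop) (SE : edge T -> Prop)
  : Prop :=
  fin_set (fun X => exists v, SV v /\ X = orbitV H v) /\
  fin_set (fun X => exists e, SE e /\ X = orbitE H e).

Definition tame (H : G -> Prop) : Prop :=
  fixes_vertex H \/
  ((exists h, H h /\ hyperbolic h) /\
   exists SV SE, minimal_H_subtree H SV SE /\ finite_quotient H SV SE).

End ActionDefs.

(* Main.v *)
Require Import Defs.
From Stdlib Require Import List Classical FunctionalExtensionality PropExtensionality Lia.
Import ListNotations.
Set Implicit Arguments.
Unset Strict Implicit.
Notation rv := Defs.rev.

Section GraphLemmas.
Variable X : graph.
Hypothesis Hinv : forall e : edge X, rv (rv e) = e.
Implicit Types (e f x y : edge X) (p q : list (edge X)) (u v w : vert X).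

Lemma tgt_rev (e : edge X) : tgt (rv e) = src e.
Proof. unfold tgt. now rewrite Hinv. Qed.

Lemma path_app (P : edge X -> Prop) p q u v :
  path_in P u v (p ++ q) <-> exists w, path_in P u w p /\ path_in P w v q.
Proof. revert u; induction p as [|e p IH]; simpl; intros u.
  - split; [intros H; exists u; auto | intros (w & -> & H); exact H].
  - split.
    + intros (H1 & H2 & H3). apply IH in H3. destruct H3 as (w & H4 & H5). exists w. auto.
    + intros (w & (H1 & H2 & H3) & H4). split; [auto|split;[auto|]]. apply IH. eauto.
Qed.

Lemma path_end (P Q : edge X -> Prop) p u v v' : path_in P u v p -> path_in Q u v' p -> v = v'.
Proof. revert u; induction p as [|e p IH]; simpl; intros u H1 H2.
  - congruence.
  - destruct H1 as (_&_&H1); destruct H2 as (_&_&H2); eauto. Qed.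

Lemma path_forall (P : edge X -> Prop) p u v : path_in P u v p -> forall e, In e p -> P e.
Proof. revert u; induction p as [|f p IH]; simpl; intros u H e Hin; [contradiction|].
  destruct H as (H1&H2&H3). destruct Hin as [<-|Hin]; eauto. Qed.

Lemma path_of_forall (P Q : edge X -> Prop) p u v : path_in P u v p ->
  (forall e, In e p -> Q e) -> path_in Q u v p.
Proof. revert u; induction p as [|f p IH]; simpl; intros u H HQ; [exact H|].
  destruct H as (H1&H2&H3). split; [auto|split;[auto|]]. eauto. Qed.

Definition revp (p : list (edge X)) := List.rev (map (@rv X) p).

Lemma revp_cons e p : revp (e :: p) = revp p ++ [rv e].
Proof. reflexivity. Qed.

Lemma path_revp (P : edge X -> Prop) (HP : forall e, P e -> P (rv e)) p u v :
  path_in P u v p -> path_in P v u (revp p).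
Proof. revert u; induction p as [|e p IH]; simpl; intros u H.
  - symmetry; exact H.
  - destruct H as (H1&H2&H3). rewrite revp_cons. apply path_app. exists (tgt e). split; [eauto|].
    simpl. split; [auto|]. split; [unfold tgt; reflexivity|]. rewrite tgt_rev. exact H2.
Qed.

Lemma reduced_tl e p : reduced (e :: p) -> reduced p.
Proof. destruct p; simpl; tauto. Qed.

Lemma reduced_cons e p : reduced p -> (forall f q, p = f :: q -> f <> rv e) -> reduced (e :: p).
Proof. destruct p as [|f q]; simpl; auto. intros H1 H2. split; eauto. Qed.

Lemma reduced_app_l p q : reduced (p ++ q) -> reduced p.
Proof. induction p as [|e p IH]; simpl; [auto|]. destruct p as [|f p]; simpl in *; auto.
  intros [H1 H2]. split; [exact H1|]. apply IH; exact H2. Qed.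

Lemma reduced_app_r p q : reduced (p ++ q) -> reduced q.
Proof. induction p as [|e p IH]; simpl; auto. intros H. apply IH. eapply reduced_tl; eauto. Qed.

Lemma reduced_app p q : reduced p -> reduced q ->
  (forall p' x y q', p = p' ++ [x] -> q = y :: q' -> y <> rv x) -> reduced (p ++ q).
Proof. induction p as [|e p IH]; simpl; intros Hp Hq J; auto.
  apply reduced_cons.
  - apply IH; [eapply reduced_tl; eauto| auto |]. intros p' x y q' E1 E2.
    apply (J (e :: p') x y q'); subst; auto.
  - intros f r E. destruct p as [|g p].
    + simpl in E. subst q. apply (J [] e f r); auto.
    + simpl in E. injection E; intros; subst. simpl in Hp. tauto.
Qed.

Lemma revp_reduced p : reduced p -> reduced (revp p).
Proof. induction p as [|e p IH]; intros H; [simpl; auto|].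
  rewrite revp_cons. apply reduced_app; [apply IH; eapply reduced_tl; eauto| simpl; auto|].
  intros p' x y q' E1 E2. injection E2; intros; subst y q'.
  destruct p as [|f p].
  { simpl in E1. destruct p'; discriminate. }
  rewrite revp_cons in E1. apply app_inj_tail in E1. destruct E1 as [_ <-].
  simpl in H. destruct H as [H _]. intro C. apply H. rewrite Hinv in C. congruence.
Qed.

Lemma reduce_path (P : edge X -> Prop) p u v : path_in P u v p ->
  exists p', reduced p' /\ path_in P u v p'.
Proof. revert u; induction p as [|e p IH]; intros u H.
  - exists []; simpl in *; auto.
  - destruct H as (H1&H2&H3). destruct (IH _ H3) as (q & Rq & Pq).
    destruct q as [|f q].
    + exists [e]. simpl in *. auto.
    + destruct (classic (f = rv e)) as [Ef|Ef].
      * subst f. exists q. split; [eapply reduced_tl; eauto|]. destruct Pq as (_&_&Hq).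
        rewrite tgt_rev, H2 in Hq. exact Hq.
      * exists (e :: f :: q). split; [simpl; split; auto|]. simpl in *. tauto.
Qed.

Lemma reduced_unique (P : edge X -> Prop) (HP : forall e, P e -> P (rv e)) (NC : no_circuit P) :
  forall p1 p2 u v, path_in P u v p1 -> path_in P u v p2 -> reduced p1 -> reduced p2 -> p1 = p2.
Proof. induction p1 as [|e q1 IH]; intros p2 u v H1 H2 R1 R2.
  - simpl in H1. subst v. destruct p2 as [|f q2]; auto. exfalso. eapply NC; [|exact H2| exact R2]. discriminate.
  - destruct p2 as [|f q2].
    + simpl in H2; subst v. exfalso. eapply NC; [|exact H1|exact R1]; discriminate.
    + destruct (classic (e = f)) as [<-|Hne].
      * f_equal. destruct H1 as (_&_&H1), H2 as (_&_&H2). eapply IH; eauto using reduced_tl.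
      * exfalso. apply (NC v (revp (f :: q2) ++ e :: q1)).
        -- intro C. apply app_eq_nil in C as [_ C]. discriminate.
        -- apply path_app. exists u. split; [apply path_revp; auto | auto].
        -- apply reduced_app; [apply revp_reduced; auto | auto |].
           intros p' x y q' E1 E2. rewrite revp_cons in E1. apply app_inj_tail in E1.
           destruct E1 as [_ <-]. injection E2; intros _ <-. rewrite Hinv. exact Hne.
Qed.

End GraphLemmas.
From Stdlib Require Import List Classical FunctionalExtensionality PropExtensionality Lia.
Import ListNotations.
Set Implicit Arguments.
Unset Strict Implicit.

Section GroupLemmas.
Variable G : group.
Implicit Types x y z : G.
Lemma mulgV x : gmul x (ginv x) = gone G.
Proof.
  rewrite <- (@gmul1 G (gmul x (ginv x))).
  rewrite <- (@gmulV G (ginv x)) at 1.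
  rewrite <- gmulA. rewrite (@gmulA G (ginv x) x (ginv x)). rewrite gmulV, gmul1. apply gmulV.
Qed.
Lemma mulg1 x : gmul x (gone G) = x.
Proof. rewrite <- (@gmulV G x). rewrite gmulA, mulgV. apply gmul1. Qed.
End GroupLemmas.

Section ActionLemmas.
Variables (G : group) (T : graph) (A : action G T) (H : G -> Prop).
Hypothesis hH : subgroup H.
Hypothesis HinvT : forall e : edge T, rv (rv e) = e.

Lemma actVK g v : actV A (ginv g) (actV A g v) = v.
Proof. rewrite <- actVM, gmulV. apply actV1. Qed.
Lemma actVK' g v : actV A g (actV A (ginv g) v) = v.
Proof. rewrite <- actVM, mulgV. apply actV1. Qed.
Lemma actEK g e : actE A (ginv g) (actE A g e) = e.
Proof. rewrite <- actEM, gmulV. apply actE1. Qed.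
Lemma actEK' g e : actE A g (actE A (ginv g) e) = e.
Proof. rewrite <- actEM, mulgV. apply actE1. Qed.

Lemma H1 : H (gone G). Proof. apply hH. Qed.
Lemma HM x y : H x -> H y -> H (gmul x y). Proof. apply hH. Qed.
Lemma HV x : H x -> H (ginv x). Proof. apply hH. Qed.

Definition piV := orbitV A H.
Definition piE := orbitE A H.

Lemma piV_in v : piV v v.
Proof. exists (gone G). split; [apply H1| apply actV1]. Qed.
Lemma piE_in e : piE e e.
Proof. exists (gone G). split; [apply H1| apply actE1]. Qed.

Lemma piV_eq v w : piV v = piV w <-> exists h, H h /\ actV A h v = w.
Proof. split.
  - intros E. assert (Hw : piV v w) by (rewrite E; apply piV_in). exact Hw.
  - intros (h & Hh & <-). apply functional_extensionality; intros x.
    apply propositional_extensionality. split.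
    + intros (k & Hk & <-). exists (gmul k (ginv h)). split; [apply HM; auto; apply HV; auto|].
      rewrite actVM, actVK. reflexivity.
    + intros (k & Hk & <-). exists (gmul k h). split; [apply HM; auto|]. apply actVM.
Qed.

Lemma piE_eq e f : piE e = piE f <-> exists h, H h /\ actE A h e = f.
Proof. split.
  - intros E. assert (Hw : piE e f) by (rewrite E; apply piE_in). exact Hw.
  - intros (h & Hh & <-). apply functional_extensionality; intros x.
    apply propositional_extensionality. split.
    + intros (k & Hk & <-). exists (gmul k (ginv h)). split; [apply HM; auto; apply HV; auto|].
      rewrite actEM, actEK. reflexivity.
    + intros (k & Hk & <-). exists (gmul k h). split; [apply HM; auto|]. apply actEM.
Qed.

Lemma piV_act h v : H h -> piV (actV A h v) = piV v.
Proof. intros Hh. symmetry. apply piV_eq. eauto. Qed.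
Lemma piE_act h e : H h -> piE (actE A h e) = piE e.
Proof. intros Hh. symmetry. apply piE_eq. eauto. Qed.

Definition Y := quot_graph A H.

Lemma src_piE e : @src Y (piE e) = piV (src e).
Proof. apply functional_extensionality; intros w. apply propositional_extensionality.
  simpl. split.
  - intros (e' & (h & Hh & <-) & (k & Hk & <-)). rewrite act_src, <- actVM.
    exists (gmul k h). split; [apply HM; auto| reflexivity].
  - intros Hw. exists e. split; [apply piE_in| exact Hw].
Qed.

Lemma rev_piE e : @rv Y (piE e) = piE (rv e).
Proof. apply functional_extensionality; intros f. apply propositional_extensionality.
  simpl. unfold piE, orbitE. split.
  - intros (h & Hh & Ef). exists h. split; auto. rewrite <- (act_rev A h e), Ef. apply HinvT.
  - intros (h & Hh & Ef). exists h. split; auto. rewrite <- Ef, act_rev, HinvT. reflexivity.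
Qed.

Lemma tgt_piE e : @tgt Y (piE e) = piV (tgt e).
Proof. unfold tgt. rewrite rev_piE. apply src_piE. Qed.

Lemma Y_inv : forall E : edge Y, rv (rv E) = E.
Proof. intros E. apply functional_extensionality; intros f. simpl. rewrite HinvT. reflexivity. Qed.

Lemma path_pi (P : edge T -> Prop) (Q : edge Y -> Prop) p u v :
  path_in P u v p -> (forall e, In e p -> Q (piE e)) -> path_in Q (piV u) (piV v) (map piE p).
Proof. revert u; induction p as [|e p IH]; cbn [path_in map In]; intros u Hp HQ.
  - congruence.
  - destruct Hp as (H1' & H2 & H3). split; [auto|]. split.
    + rewrite src_piE, H2. reflexivity.
    + rewrite tgt_piE. apply IH; auto.
Qed.

End ActionLemmas.
From Stdlib Require Import List Classical FunctionalExtensionality PropExtensionality Lia.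
Import ListNotations.
Set Implicit Arguments.
Unset Strict Implicit.

Lemma app_inv_len {B : Type} (l1 l2 m1 m2 : list B) :
  length l1 = length m1 -> l1 ++ l2 = m1 ++ m2 -> l1 = m1.
Proof. revert m1; induction l1 as [|a l1 IH]; intros [|b m1]; simpl; intros E1 E2; try discriminate; auto.
  injection E2; intros E3 ->. f_equal. apply IH; auto. Qed.

Lemma revp_snoc (X : graph) (l : list (edge X)) x : revp (l ++ [x]) = rv x :: revp l.
Proof. unfold revp. rewrite map_app. rewrite rev_app_distr. reflexivity. Qed.

Lemma length_revp (X : graph) (l : list (edge X)) : length (revp l) = length l.
Proof. unfold revp. rewrite length_rev, length_map. reflexivity. Qed.

Section Serre.
Variables (G : group) (T : graph) (A : action G T) (H : G -> Prop).
Hypothesis hT : is_tree T.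
Hypothesis hH : subgroup H.
Hypothesis hfree : acts_freely_on_edges A H.

Let HinvT : forall e : edge T, rv (rv e) = e := proj1 (proj1 hT).
Let TT := fun _ : edge T => True.

Lemma T_nc : no_circuit TT.
Proof. apply hT. Qed.

Lemma rpath (u v : vert T) : exists p, reduced p /\ path_in TT u v p.
Proof. pose proof hT as (_ & _ & _ & Hc & _). destruct (Hc u v I I) as (p & Hp).
  apply (reduce_path HinvT) in Hp. exact Hp. Qed.

Lemma runique (p1 p2 : list (edge T)) u v : path_in TT u v p1 -> path_in TT u v p2 ->
  reduced p1 -> reduced p2 -> p1 = p2.
Proof. apply reduced_unique; auto. apply T_nc. Qed.

Lemma path_act (P : edge T -> Prop) g p u v : path_in P u v p ->
  path_in TT (actV A g u) (actV A g v) (map (actE A g) p).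
Proof. revert u; induction p as [|e p IH]; cbn [path_in map]; intros u Hp.
  - congruence.
  - destruct Hp as (_&H2&H3). split; [exact I|]. split.
    + rewrite act_src, H2. reflexivity.
    + unfold tgt. rewrite act_rev, act_src. apply IH. exact H3.
Qed.

Lemma actE_inj g e f : actE A g e = actE A g f -> e = f.
Proof. intros E. rewrite <- (actEK A g e), <- (actEK A g f), E. reflexivity. Qed.
Lemma actV_inj g v w : actV A g v = actV A g w -> v = w.
Proof. intros E. rewrite <- (actVK A g v), <- (actVK A g w), E. reflexivity. Qed.

Lemma reduced_act g p : reduced p -> reduced (map (actE A g) p).
Proof. induction p as [|e p IH]; intros R; [simpl; auto|].
  cbn [map]. apply reduced_cons; [apply IH; eapply reduced_tl; eauto|].
  intros f q E. destruct p as [|e' p]; [discriminate|]. cbn [map] in E. injection E; intros _ <-.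
  intros C. rewrite act_rev in C. apply actE_inj in C. simpl in R. tauto.
Qed.

Lemma fix2 g u v : actV A g u = u -> actV A g v = v -> u <> v -> exists e, actE A g e = e.
Proof. intros Hu Hv Huv. destruct (rpath u v) as (p & R & P).
  pose proof (path_act g P) as P'. rewrite Hu, Hv in P'.
  pose proof (runique P' P (reduced_act g R) R) as E.
  destruct p as [|e p]; [simpl in P; contradiction|]. exists e. cbn [map] in E. congruence.
Qed.

Lemma nontriv_moves g e : H g -> g <> gone G -> actE A g e <> e.
Proof. intros Hg Hne C. apply Hne. eapply hfree; eauto. Qed.

Lemma serre_fix : (forall h, H h -> ~ hyperbolic A h) -> fixes_vertex A H.
Proof.
  intros NH.
  destruct (classic (exists a, H a /\ a <> gone G)) as [(a & Ha & Hane)|Hall].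
  2:{ pose proof hT as (_ & _ & (v0 & _) & _). exists v0. intros h Hh.
      destruct (classic (h = gone G)) as [->|Hne]; [apply actV1|]. exfalso; eauto. }
  assert (Hfix : forall h, H h -> exists v, actV A h v = v).
  { intros h Hh. apply NNPP. intros C. apply (NH h Hh). intros v Hv. apply C. eauto. }
  destruct (Hfix a Ha) as (p & Hp). exists p. intros b Hb.
  destruct (classic (b = gone G)) as [->|Hbne]; [apply actV1|].
  destruct (Hfix b Hb) as (q & Hq).
  destruct (classic (q = p)) as [<-|Hqp]; [exact Hq|].
  exfalso.
  destruct (Hfix (gmul a b) (HM hH Ha Hb)) as (r & Hr). rewrite actVM in Hr.
  set (s := actV A b r) in *.
  destruct (rpath r q) as (al & Ral & Pal).
  destruct (rpath r p) as (be & Rbe & Pbe).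
  assert (Hmove : forall g x, H g -> g <> gone G -> actE A g x <> x) by (intros; apply nontriv_moves; auto).
  destruct al as [|x0 al0] eqn:Eal.
  { simpl in Pal. subst q. unfold s in Hr. rewrite Hq in Hr.
    destruct (fix2 Hr Hp Hqp) as (e & He). exact (Hmove a e Ha Hane He). }
  destruct be as [|y0 be0] eqn:Ebe.
  { simpl in Pbe. subst p. assert (E : actV A a s = actV A a r) by (rewrite Hr, Hp; reflexivity). apply actV_inj in E. unfold s in E. clear Hr. rename E into Hr.
    destruct (fix2 Hr Hq (not_eq_sym Hqp)) as (e & He). exact (Hmove b e Hb Hbne He). }
  rewrite <- Eal in *. rewrite <- Ebe in *.
  assert (Hal_ne : al <> []) by (rewrite Eal; discriminate).
  assert (Hbe_ne : be <> []) by (rewrite Ebe; discriminate).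
  set (ai := ginv a).
  assert (Hai : H ai) by (apply (HV hH); auto).
  assert (Haine : ai <> gone G).
  { intros C. apply Hane. pose proof (mulgV a) as E. unfold ai in C. rewrite C, mulg1 in E. exact E. }
  assert (Hs : actV A ai r = s) by (rewrite <- Hr; apply actVK).
  assert (Hpi : actV A ai p = p) by (rewrite <- Hp at 1; apply actVK).
  set (path1 := al ++ revp (map (actE A b) al)).
  set (path2 := be ++ revp (map (actE A ai) be)).
  assert (P1 : path_in TT r s path1).
  { apply path_app. exists q. split; [exact Pal|]. apply path_revp; auto.
    pose proof (path_act b Pal) as P. rewrite Hq in P. exact P. }
  assert (P2 : path_in TT r s path2).
  { apply path_app. exists p. split; [exact Pbe|]. apply path_revp; auto.
    pose proof (path_act ai Pbe) as P. rewrite Hpi, Hs in P. exact P. }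
  assert (R1 : reduced path1).
  { apply reduced_app; auto. apply revp_reduced; auto. apply reduced_act; auto.
    intros p' x y q' E1 E2. rewrite E1 in E2. rewrite map_app in E2; cbn [map] in E2; rewrite revp_snoc in E2.
    injection E2; intros _ <-. intros C. apply (f_equal (@rv T)) in C. rewrite !HinvT in C.
    exact (Hmove b x Hb Hbne C). }
  assert (R2 : reduced path2).
  { apply reduced_app; auto. apply revp_reduced; auto. apply reduced_act; auto.
    intros p' x y q' E1 E2. rewrite E1 in E2. rewrite map_app in E2; cbn [map] in E2; rewrite revp_snoc in E2.
    injection E2; intros _ <-. intros C. apply (f_equal (@rv T)) in C. rewrite !HinvT in C.
    exact (Hmove ai x Hai Haine C). }
  pose proof (runique P1 P2 R1 R2) as E12.
  assert (Hlen : length al = length be).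
  { pose proof (f_equal (@length _) E12) as L. unfold path1, path2 in L.
    rewrite !length_app, !length_revp, !length_map in L. lia. }
  pose proof (app_inv_len Hlen E12) as Eab. rewrite Eab in Pal.
  apply Hqp. eapply path_end; eauto.
Qed.

End Serre.
From Stdlib Require Import List Classical FunctionalExtensionality PropExtensionality Lia Wf_nat.
Import ListNotations.
Set Implicit Arguments.
Unset Strict Implicit.

Lemma min_nat (P : nat -> Prop) : (exists n, P n) -> exists n, P n /\ forall m, m < n -> ~ P m.
Proof. intros [n Hn]. induction n as [n IH] using (well_founded_induction lt_wf).
  destruct (classic (exists m, m < n /\ P m)) as [(m & Hm & Pm)|N].
  - exact (IH m Hm Pm).
  - exists n. split; auto. intros m Hm Pm. apply N; eauto.
Qed.

Lemma filter_ex {B : Type} (Q : B -> Prop) (l : list B) : exists l',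
  (forall x, In x l -> Q x -> In x l') /\ (forall x, In x l' -> Q x) /\
  length l' <= length l /\ ((exists x, In x l /\ ~ Q x) -> length l' < length l).
Proof. induction l as [|a l IH].
  - exists []. simpl. split; [tauto|]. split; [tauto|]. split; [lia|]. intros (x & [] & _).
  - destruct IH as (l' & H1 & H2 & H3 & H4). destruct (classic (Q a)) as [Qa|Qa].
    + exists (a :: l'). simpl. split; [intros x [<-|Hx] Qx; auto|]. split; [intros x [<-|Hx]; auto|].
      split; [lia|]. intros (x & [<-|Hx] & Qx); [contradiction|]. assert (length l' < length l) by eauto. lia.
    + exists l'. simpl. split; [intros x [<-|Hx] Qx; [contradiction|auto]|]. split; [auto|]. split; [lia|]. intros _. lia.
Qed.

Section Minimize.
Variables (G : group) (T : graph) (A : action G T) (H : G -> Prop).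
Hypothesis hH : subgroup H.

Definition cover (SE : edge T -> Prop) (l : list (edge T)) : Prop :=
  forall e, SE e -> exists e0, In e0 l /\ SE e0 /\ exists h, H h /\ actE A h e0 = e.

Lemma minimize : (exists h, H h /\ hyperbolic A h) ->
  (exists SV SE l, H_inv_subtree A H SV SE /\ cover SE l) ->
  exists SV SE, minimal_H_subtree A H SV SE /\ finite_quotient A H SV SE.
Proof.
  intros (h0 & Hh0 & Hyp0) Hex.
  pose (P := fun n => exists SV SE l, H_inv_subtree A H SV SE /\ cover SE l /\ length l = n).
  destruct (@min_nat P) as (n & (SV0 & SE0 & l0 & Hinv0 & Hc0 & Hl0) & Hmin).
  { destruct Hex as (SV & SE & l & H1 & H2). exists (length l), SV, SE, l. auto. }
  pose proof Hinv0 as ((Hsg & (w & Hw) & Hconn & Hnc) & HinvV & HinvE).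
  assert (Hedge : exists e0, SE0 e0).
  { apply NNPP. intros Nedge. apply (Hyp0 w).
    destruct (Hconn w (actV A h0 w) Hw (HinvV h0 w Hh0 Hw)) as ([|f p] & Hp).
    - simpl in Hp. symmetry; exact Hp.
    - exfalso. apply Nedge. exists f. apply Hp. }
  destruct Hedge as (e0 & He0).
  assert (Hsrc : forall v, SV0 v -> exists f, SE0 f /\ src f = v).
  { intros v Hv. destruct (Hconn v (src e0) Hv (proj1 (Hsg e0 He0))) as ([|f p] & Hp).
    - simpl in Hp. exists e0. auto.
    - exists f. split; apply Hp. }
  exists SV0, SE0. split; [split|].
  - exact Hinv0.
  - intros SV' SE' Hinv' Hsub1 Hsub2. pose proof Hinv' as ((Hsg' & _ & _ & _) & HinvV' & HinvE').
    assert (HE : forall e, SE0 e -> SE' e).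
    { intros e He. apply NNPP. intros Ne.
      destruct (filter_ex SE' l0) as (l' & F1 & F2 & F3 & F4).
      apply (Hmin (length l')).
      - rewrite <- Hl0. apply F4. destruct (Hc0 e He) as (e1 & Hin & He1 & h & Hh & <-).
        exists e1. split; [exact Hin|]. intros C. apply Ne. apply HinvE'; auto.
      - exists SV', SE', l'. split; [|split; auto].
        + exact Hinv'.
        + intros e' He'. destruct (Hc0 e' (Hsub2 e' He')) as (e1 & Hin & He1 & h & Hh & <-).
          assert (SE' e1) by (rewrite <- (actEK A h e1); apply HinvE'; auto; apply (HV hH); auto).
          exists e1. split; [apply F1; auto|]. split; auto. eauto. }
    split; auto.
    intros v Hv. destruct (Hsrc v Hv) as (f & Hf & <-). apply (Hsg' f). auto.
  - split.
    + exists (map (fun e => orbitV A H (src e)) l0). intros X (v & Hv & ->).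
      destruct (Hsrc v Hv) as (f & Hf & <-). destruct (Hc0 f Hf) as (e1 & Hin & He1 & h & Hh & <-).
      apply in_map_iff. exists e1. split; auto. rewrite act_src.
      change (piV A H (src e1) = piV A H (actV A h (src e1))). symmetry. apply piV_act; auto.
    + exists (map (orbitE A H) l0). intros X (e & He & ->).
      destruct (Hc0 e He) as (e1 & Hin & He1 & h & Hh & <-).
      apply in_map_iff. exists e1. split; auto.
      change (piE A H e1 = piE A H (actE A h e1)). symmetry. apply piE_act; auto.
Qed.
End Minimize.
From Stdlib Require Import List Classical FunctionalExtensionality PropExtensionality Lia.
Import ListNotations.
Set Implicit Arguments.
Unset Strict Implicit.

Lemma conj_one (G : group) (k h : G) : gmul k (gmul h (ginv k)) = gone G -> h = gone G.
Proof. intros E.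
  assert (E2 : gmul (ginv k) (gmul k (gmul h (ginv k))) = ginv k) by (rewrite E, mulg1; reflexivity).
  rewrite gmulA, gmulV, gmul1 in E2.
  assert (E3 : gmul (gmul h (ginv k)) k = gmul (ginv k) k) by (rewrite E2; reflexivity).
  rewrite <- gmulA, gmulV, mulg1 in E3. exact E3.
Qed.

Lemma in_tl {B : Type} (x : B) l : In x (tl l) -> In x l.
Proof. destruct l; simpl; auto. Qed.

Section Core.
Variables (G : group) (T : graph) (A : action G T) (H : G -> Prop).
Hypothesis hT : is_tree T.
Hypothesis hH : subgroup H.
Hypothesis hfree : acts_freely_on_edges A H.
Notation YY := (quot_graph A H).
Variables (SVq : vert YY -> Prop) (SEq : edge YY -> Prop).
Hypothesis Hmax : maximal_subtree (@QV _ _ A H) (@QE _ _ A H) SVq SEq.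
Variable base : vert YY.
Hypothesis Hbase : SVq base.

Let HinvT : forall e : edge T, rv (rv e) = e := proj1 (proj1 hT).
Let TT := fun _ : edge T => True.
Notation pV := (piV A H).
Notation pE := (piE A H).
Notation QVq := (@QV _ _ A H).
Notation QEq := (@QE _ _ A H).

Lemma YsrcE e : @src YY (pE e) = pV (src e).
Proof. apply src_piE; auto. Qed.
Lemma YrevE e : @rv YY (pE e) = pE (rv e).
Proof. apply rev_piE; auto. Qed.
Lemma YtgtE e : @tgt YY (pE e) = pV (tgt e).
Proof. apply tgt_piE; auto. Qed.
Lemma Yinv (E : edge YY) : rv (rv E) = E.
Proof. apply Y_inv; auto. Qed.

Lemma Ysg E : SEq E -> SVq (src E) /\ SEq (rv E).
Proof. apply Hmax. Qed.
Lemma Yconn : connected_sub SVq SEq.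
Proof. apply Hmax. Qed.
Lemma Ync : no_circuit SEq.
Proof. apply Hmax. Qed.
Lemma SVq_QV X : SVq X -> QVq X.
Proof. apply Hmax. Qed.
Lemma SEq_QE E : SEq E -> QEq E.
Proof. apply Hmax. Qed.
Lemma Yrev E : SEq E -> SEq (rv E).
Proof. apply Ysg. Qed.

Lemma QV_pi v : QVq (pV v).
Proof. exists v. reflexivity. Qed.
Lemma QE_pi e : QEq (pE e).
Proof. exists e. reflexivity. Qed.

Lemma QE_tgt E : QEq E -> QVq (tgt E).
Proof. intros (e & ->). rewrite YtgtE. apply QV_pi. Qed.
Lemma QE_src E : QEq E -> QVq (src E).
Proof. intros (e & ->). rewrite YsrcE. apply QV_pi. Qed.
Lemma QE_rev E : QEq E -> QEq (rv E).
Proof. intros (e & ->). rewrite YrevE. apply QE_pi. Qed.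

Lemma exit_edge p U W : path_in QEq U W p -> SVq U -> ~ SVq W ->
  exists E, QEq E /\ SVq (src E) /\ ~ SVq (tgt E).
Proof. revert U; induction p as [|E p IH]; simpl; intros U Hp HU HW.
  - subst; contradiction.
  - destruct Hp as (H1 & H2 & H3). destruct (classic (SVq (tgt E))) as [Ht|Ht].
    + eapply IH; eauto.
    + exists E. subst U. auto.
Qed.

Section Extend.
Variable E : edge YY.
Hypotheses (HQE : QEq E) (Hs : SVq (src E)) (Ht : ~ SVq (tgt E)).
Let SV' := fun X => SVq X \/ X = tgt E.
Let SE' := fun F => SEq F \/ F = E \/ F = rv E.

Lemma srcE_ne_tgtE : src E <> tgt E.
Proof. intros C. apply Ht. rewrite <- C. exact Hs. Qed.

Lemma stayq p a b : path_in SE' a b p -> reduced p -> SVq a -> SVq b -> path_in SEq a b p.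
Proof. revert a; induction p as [|e q IH]; intros a Hp R Ha Hb.
  - exact Hp.
  - destruct Hp as (He & Hsrc & Hq). destruct He as [He|[He|He]].
    + assert (SVq (tgt e)) by (apply (Ysg (Yrev He))).
      split; [auto|split; [auto|]]. apply IH; auto. eapply reduced_tl; eauto.
    + subst e. exfalso. destruct q as [|f q].
      * simpl in Hq. subst b. contradiction.
      * destruct Hq as (Hf & Hfs & _). destruct Hf as [Hf|[Hf|Hf]].
        -- apply Ht. rewrite <- Hfs. apply (Ysg Hf).
        -- subst f. apply srcE_ne_tgtE. exact Hfs.
        -- simpl in R. destruct R as [R _]. contradiction.
    + subst e. exfalso. apply Ht. change (SVq (src (rv E))). rewrite Hsrc. exact Ha.
Qed.

Lemma extend_subtree : subtree SV' SE'.
Proof.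
  split; [|split; [|split]].
  - intros F [HF|[->| ->]].
    + destruct (Ysg HF). split; left; auto.
    + split; [left; auto| right; right; auto].
    + split; [right; reflexivity| right; left; apply Yinv].
  - exists base. left. exact Hbase.
  - assert (Hm : forall p a b, path_in SEq a b p -> path_in SE' a b p).
    { intros p a b Hp. eapply path_of_forall; [exact Hp|]. intros F HF. left. eapply path_forall; eauto. }
    intros u w [Hu| ->] [Hw| ->].
    + destruct (Yconn Hu Hw) as (p & Hp). eauto.
    + destruct (Yconn Hu Hs) as (p & Hp). exists (p ++ [E]). apply path_app. exists (src E).
      split; [eauto|]. cbn [path_in]. split; [right; left; auto|]. auto.
    + destruct (Yconn Hs Hw) as (p & Hp). exists (rv E :: p). cbn [path_in]. split; [right; right; auto|].
      split; [reflexivity|]. rewrite (tgt_rev (@Yinv)). eauto.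
    + exists []. reflexivity.
  - intros w p Hne Hp R.
    destruct p as [|e1 q]; [contradiction|].
    assert (Hw : SVq w \/ w = tgt E).
    { destruct Hp as (He1 & Hsrc & _). subst w. destruct He1 as [He1|[->| ->]].
      - left. apply (Ysg He1).
      - left. exact Hs.
      - right. reflexivity. }
    destruct Hw as [Hw| ->].
    + exact (Ync Hne (stayq Hp R Hw Hw) R).
    + destruct Hp as (He1 & Hsrc & Hq). destruct He1 as [He1|[He1|He1]].
      * apply Ht. rewrite <- Hsrc. apply (Ysg He1).
      * subst e1. apply srcE_ne_tgtE. exact Hsrc.
      * subst e1. rewrite (tgt_rev (@Yinv)) in Hq.
        destruct q as [|g0 q0] eqn:Eq.
        { simpl in Hq. apply srcE_ne_tgtE. exact Hq. }
        rewrite <- Eq in *. assert (Hqne : q <> []) by (rewrite Eq; discriminate).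
        destruct (exists_last Hqne) as (q' & g & Eq').
        rewrite Eq' in Hq. apply path_app in Hq. destruct Hq as (z & Hq' & Hg).
        destruct Hg as (Hg & Hgs & Hgt).
        assert (Hg' : g = E).
        { destruct Hg as [Hg|[Hg|Hg]]; auto; exfalso.
          - apply Ht. rewrite <- Hgt. apply (Ysg (Yrev Hg)).
          - subst g. apply srcE_ne_tgtE. rewrite <- Hgt. symmetry. apply (tgt_rev (@Yinv)). }
        subst g.
        assert (Rq : reduced q). { eapply reduced_tl; exact R. }
        rewrite Eq' in Rq. apply reduced_app_l in Rq.
        rewrite <- Hgs in Hq'.
        destruct q' as [|x q''].
        -- rewrite Eq' in R. simpl in R. destruct R as [R _]. apply R. symmetry. apply Yinv.
        -- eapply Ync; [| apply stayq; [exact Hq'|exact Rq|exact Hs|exact Hs] | exact Rq]. discriminate.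
Qed.
End Extend.

Lemma spanning X : QVq X -> SVq X.
Proof.
  intros (v & ->). change (orbitV A H v) with (pV v). apply NNPP; intros Nv.
  destruct (SVq_QV Hbase) as (v0 & Ev0). change (orbitV A H v0) with (pV v0) in Ev0.
  destruct (rpath hT v0 v) as (p & _ & Hp).
  assert (Hp' : path_in QEq (pV v0) (pV v) (map pE p)).
  { apply path_pi with (P := TT); auto. intros e _. apply QE_pi. }
  rewrite <- Ev0 in Hp'.
  destruct (exit_edge Hp' Hbase Nv) as (E & HQE & Hs & Ht).
  destruct Hmax as (_ & _ & _ & Hmx).
  assert (Hsub := extend_subtree Hs Ht).
  edestruct (Hmx _ _ Hsub) as [Hv _].
  - intros X [HX| ->]; [apply SVq_QV; auto| apply QE_tgt; auto].
  - intros F [HF|[->| ->]]; [apply SEq_QE; auto| auto | apply QE_rev; auto].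
  - intros X HX; left; auto.
  - intros F HF; left; auto.
  - apply Ht. apply Hv. right. reflexivity.
Qed.

Definition Bset (b : vert YY) : Prop :=
  (QVq b /\ ~ @quot_degenerate _ _ A H b) \/ (exists E, QEq E /\ ~ SEq E /\ b = src E).

Definition Zed (E : edge YY) : Prop :=
  (QEq E /\ ~ SEq E) \/
  (exists b p, Bset b /\ reduced p /\ path_in SEq base b p /\ (In E p \/ In (rv E) p)).

Definition SEc (e : edge T) := Zed (pE e).
Definition SVc (v : vert T) := pV v = base \/ exists e, SEc e /\ src e = v.

Lemma Zrev E : Zed E -> Zed (rv E).
Proof. intros [[HQ HS]|(b & p & Hb & R & Hp & Hin)].
 - left. split; [apply QE_rev; auto|]. intros C. apply HS. rewrite <- (Yinv E). apply Yrev; auto.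
 - right. exists b, p. split; [auto|split; [auto|split; [auto|]]]. rewrite Yinv. tauto.
Qed.

Definition ZS := fun F => SEq F /\ Zed F.

Lemma ZS_rev F : ZS F -> ZS (rv F).
Proof. intros [H1 H2]. split; [apply Yrev|apply Zrev]; auto. Qed.

Lemma path_ZS b p : reduced p -> path_in SEq base b p -> Bset b -> path_in ZS base b p.
Proof. intros R Hp Hb. eapply path_of_forall; [exact Hp|]. intros F HF.
  split; [eapply path_forall; eauto|]. right. exists b, p. auto. Qed.

Lemma Zconn E : Zed E -> exists p, path_in ZS base (src E) p.
Proof. intros [[HQ HS]|(b & p & Hb & R & Hp & [Hin|Hin])].
 - assert (HB : Bset (src E)) by (right; exists E; auto).
   assert (Hsv : SVq (src E)) by (apply spanning, QE_src; auto).
   destruct (Yconn Hbase Hsv) as (p0 & Hp0). destruct (reduce_path (@Yinv) Hp0) as (p & R & Hp).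
   exists p. apply path_ZS; auto.
 - pose proof (path_ZS R Hp Hb) as HZ. apply in_split in Hin. destruct Hin as (p1 & p2 & ->).
   apply path_app in HZ. destruct HZ as (w & H1 & H2). exists p1. destruct H2 as (_ & Hs & _).
   rewrite Hs. exact H1.
 - pose proof (path_ZS R Hp Hb) as HZ. apply in_split in Hin. destruct Hin as (p1 & p2 & ->).
   exists (p1 ++ [rv E]).
   replace (p1 ++ rv E :: p2) with ((p1 ++ [rv E]) ++ p2) in HZ by (rewrite <- app_assoc; reflexivity).
   apply path_app in HZ. destruct HZ as (w & H1 & _).
   pose proof H1 as H1'. apply path_app in H1'. destruct H1' as (w' & _ & (_ & _ & Hw)).
   cbn [path_in] in Hw. rewrite (tgt_rev (@Yinv)) in Hw. rewrite Hw. exact H1.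
Qed.

Lemma SV_conn w : SVc w -> exists p, path_in ZS base (pV w) p.
Proof. intros [Hw|(e & He & <-)].
  - exists []. cbn [path_in]. symmetry; exact Hw.
  - destruct (Zconn He) as (p & Hp). exists p. rewrite <- YsrcE. exact Hp.
Qed.

Lemma SE_rev e : SEc e -> SEc (rv e).
Proof. unfold SEc. rewrite <- YrevE. apply Zrev. Qed.
Lemma SE_src e : SEc e -> SVc (src e).
Proof. intros He. right. eauto. Qed.
Lemma SE_tgt e : SEc e -> SVc (tgt e).
Proof. intros He. apply SE_src. apply SE_rev. auto. Qed.

Definition trivstab (w : vert T) := forall h, H h -> actV A h w = w -> h = gone G.

Lemma degen_trivstab w : @quot_degenerate _ _ A H (pV w) -> trivstab w.
Proof. intros (v' & Ew & (e & Hsrc & Hiff)) h Hh Hfix.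
 change (orbitV A H v') with (pV v') in Ew.
 apply (piV_eq A hH) in Ew. destruct Ew as (k & Hk & Ekw).
 pose (h' := gmul k (gmul h (ginv k))).
 assert (Hh' : H h') by (apply (HM hH); auto; apply (HM hH); auto; apply (HV hH); auto).
 assert (Hfix' : actV A h' v' = v').
 { unfold h'. rewrite !actVM. rewrite <- Ekw. rewrite actVK, Hfix. reflexivity. }
 apply (Hiff h' Hh') in Hfix'. apply conj_one with (k := k). exact (hfree Hh' Hfix').
Qed.

Lemma notSV_trivstab w : ~ SVc w -> trivstab w.
Proof. intros Nw. destruct (classic (@quot_degenerate _ _ A H (pV w))) as [D|ND]; [apply degen_trivstab; auto|].
 exfalso. assert (HB : Bset (pV w)) by (left; split; [apply QV_pi|auto]).
 assert (Hsv : SVq (pV w)) by (apply spanning, QV_pi).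
 destruct (Yconn Hbase Hsv) as (p0 & Hp0). destruct (reduce_path (@Yinv) Hp0) as (p & R & Hp).
 destruct p as [|E0 p0'] eqn:Ep.
 - apply Nw. left. cbn [path_in] in Hp. symmetry; exact Hp.
 - rewrite <- Ep in *. assert (Hne : p <> []) by (rewrite Ep; discriminate).
   destruct (exists_last Hne) as (p' & E & Ep').
   assert (HZ : Zed (rv E)).
   { right. exists (pV w), p. split; [auto|split; [auto|split; [auto|]]]. right. rewrite Yinv. rewrite Ep'.
     apply in_or_app. right. left. reflexivity. }
   pose proof Hp as Hp2. rewrite Ep' in Hp2. apply path_app in Hp2. destruct Hp2 as (z & _ & (HE & _ & Ht)).
   cbn [path_in] in Ht.
   destruct (SEq_QE HE) as (e1 & ->).
   change (orbitE A H e1) with (pE e1) in *.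
   rewrite YtgtE in Ht. apply (piV_eq A hH) in Ht. destruct Ht as (k & Hk & Ekw).
   apply Nw. right. exists (actE A k (rv e1)). split.
   + unfold SEc. rewrite (piE_act A hH (rv e1) Hk). rewrite <- YrevE. exact HZ.
   + rewrite act_src. exact Ekw.
Qed.

Lemma loc_inj f g : tgt f = src g -> g <> rv f -> trivstab (src g) -> pE g <> @rv YY (pE f).
Proof. intros Et Hne Hts C. rewrite YrevE in C. symmetry in C. apply (piE_eq A hH) in C.
  destruct C as (h & Hh & Eh).
  assert (E1 : src (actE A h (rv f)) = src g) by (rewrite Eh; reflexivity).
  rewrite act_src in E1. change (src (rv f)) with (tgt f) in E1. rewrite Et in E1.
  assert (h = gone G) by (apply Hts; auto). subst h. rewrite actE1 in Eh. auto.
Qed.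

Lemma map_reduced l u v : path_in TT u v l -> reduced l ->
  (forall e, In e (tl l) -> trivstab (src e)) -> @reduced YY (map pE l).
Proof. revert u; induction l as [|e l IH]; intros u Hp R Hts; [simpl; auto|].
 cbn [map]. apply reduced_cons.
 - destruct Hp as (_ & _ & Hp). apply (IH _ Hp (reduced_tl R)). intros x Hx. apply Hts. cbn [tl]. apply in_tl; auto.
 - intros F q E. destruct l as [|g l']; [discriminate|]. cbn [map] in E. injection E; intros _ <-.
   apply loc_inj.
   + destruct Hp as (_ & _ & (_ & Hs & _)). symmetry; exact Hs.
   + simpl in R. tauto.
   + apply Hts. simpl. auto.
Qed.

Lemma ret q w v : path_in TT w v q -> SVc v -> exists m rest z, q = m ++ rest /\
  path_in TT w z m /\ SVc z /\ (forall f, In f m -> ~ SVc (src f)).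
Proof. revert w; induction q as [|f q IH]; intros w Hq Hv.
 - exists [], [], w. cbn [path_in] in Hq. split; [reflexivity|]. split; [reflexivity|].
   split; [subst; auto|]. intros x [].
 - destruct (classic (SVc w)) as [Hw|Hw].
   + exists [], (f :: q), w. split; [reflexivity|]. split; [reflexivity|]. split; [auto|]. intros x [].
   + destruct Hq as (_ & Hs & Hq). destruct (IH _ Hq Hv) as (m & rest & z & Eq & Hm & Hz & Hns).
     exists (f :: m), rest, z. split; [rewrite Eq; reflexivity|].
     split; [split; [exact I|split; auto]|]. split; auto.
     intros x [<-|Hx]; [rewrite Hs; exact Hw| auto].
Qed.

Lemma notSE_SEq e : ~ SEc e -> SEq (pE e).
Proof. intros N. apply NNPP. intros C. apply N. left. split; [apply QE_pi|auto]. Qed.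

Lemma all_SE p u v : path_in TT u v p -> reduced p -> SVc u -> SVc v -> forall e, In e p -> SEc e.
Proof. revert u; induction p as [|e q IH]; intros u Hp R Hu Hv; [intros e []|].
 destruct (classic (SEc e)) as [He|He].
 - destruct Hp as (_ & Hs & Hq). intros x [<-|Hx]; auto.
   apply (IH (tgt e)); auto; [eapply reduced_tl; eauto| apply SE_tgt; auto].
 - exfalso. destruct Hp as (_ & Hs & Hq).
   destruct (ret Hq Hv) as (m & rest & z & Eq & Hm & Hz & Hns).
   set (seg := e :: m).
   assert (Pseg : path_in TT u z seg) by (cbn [path_in seg]; split; [exact I| split; auto]).
   assert (Rseg : reduced seg) by (apply (reduced_app_l (q := rest)); rewrite Eq in R; exact R).
   assert (NSE : forall f, In f seg -> ~ SEc f).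
   { intros f [<-|Hf]; auto. intros C. apply (Hns f Hf). apply SE_src; auto. }
   set (exc := map pE seg).
   assert (Pexc : path_in SEq (pV u) (pV z) exc).
   { apply path_pi with (P := TT); auto. intros f Hf. apply notSE_SEq, NSE; auto. }
   assert (Rexc : @reduced YY exc).
   { apply map_reduced with (u := u) (v := z); auto. intros f Hf. apply notSV_trivstab. apply Hns. exact Hf. }
   destruct (SV_conn Hz) as (Pz & HPz). destruct (SV_conn Hu) as (Pu & HPu).
   assert (Hback : path_in ZS (pV z) (pV u) (revp Pz ++ Pu)).
   { apply path_app. exists base. split; [apply (path_revp (@Yinv) ZS_rev HPz) | exact HPu]. }
   destruct (reduce_path (@Yinv) Hback) as (rho & Rrho & Prho).
   apply (Ync (v := pV u) (p := exc ++ rho)).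
   + unfold exc, seg. cbn [map]. discriminate.
   + apply path_app. exists (pV z). split; auto. eapply path_of_forall; [exact Prho|].
     intros F HF. exact (proj1 (path_forall Prho HF)).
   + apply reduced_app; auto. intros p' x y q' E1 E2 C.
     assert (Zy : ZS y) by (apply (path_forall Prho); rewrite E2; left; reflexivity).
     assert (Hx : In x exc) by (rewrite E1; apply in_or_app; right; left; reflexivity).
     unfold exc in Hx. apply in_map_iff in Hx. destruct Hx as (f & <- & Hf).
     apply (NSE f Hf). unfold SEc. rewrite <- (Yinv (pE f)). rewrite <- C. apply Zrev. apply Zy.
Qed.

Lemma S_inv : H_inv_subtree A H SVc SEc.
Proof.
  split; [split; [|split; [|split]]|split].
  - intros e He. split; [apply SE_src|apply SE_rev]; auto.
  - destruct (SVq_QV Hbase) as (v0 & Ev0). exists v0. left. symmetry. exact Ev0.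
  - intros u v Hu Hv. destruct (rpath hT u v) as (p & R & Hp). exists p.
    eapply path_of_forall; [exact Hp|]. intros e He. eapply all_SE; eauto.
  - intros v p Hne Hp R. apply (T_nc hT Hne (path_of_forall (Q := TT) Hp (fun _ _ => I)) R).
  - intros h v Hh [E|(e & He & <-)].
    + left. rewrite (piV_act A hH v Hh). exact E.
    + right. exists (actE A h e). split; [|apply act_src]. unfold SEc. rewrite (piE_act A hH e Hh). exact He.
  - intros h e Hh He. unfold SEc. rewrite (piE_act A hH e Hh). exact He.
Qed.

Variables (L1 : list (edge YY)) (L2 : list (vert YY)).
Hypothesis HL1 : forall E, QEq E /\ ~ SEq E -> In E L1.
Hypothesis HL2 : forall X, QVq X /\ ~ @quot_degenerate _ _ A H X -> In X L2.

Lemma paths_fin LB0 : exists LP, forall b p E, In b LB0 -> reduced p -> path_in SEq base b p ->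
  (In E p \/ In (rv E) p) -> In E LP.
Proof. induction LB0 as [|b0 LB0 IH].
  - exists []. intros b p E [].
  - destruct IH as (LP & HLP).
    destruct (classic (exists p0, reduced p0 /\ path_in SEq base b0 p0)) as [(p0 & R0 & P0)|N].
    + exists (p0 ++ map (@rv YY) p0 ++ LP). intros b p E [<-|Hb] R Hp Hin.
      * assert (p = p0) by exact (reduced_unique (@Yinv) Yrev Ync Hp P0 R R0). subst p.
        destruct Hin as [Hin|Hin]; apply in_or_app; [left; auto|right; apply in_or_app; left].
        rewrite <- (Yinv E). apply in_map. exact Hin.
      * apply in_or_app; right; apply in_or_app; right. eapply HLP; eauto.
    + exists LP. intros b p E [<-|Hb] R Hp Hin; [exfalso; apply N; eauto|]. eapply HLP; eauto.
Qed.

Lemma Zfin : exists LZ, forall E, Zed E -> In E LZ.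
Proof.
  destruct (paths_fin (L2 ++ map (@src YY) L1)) as (LP & HLP).
  exists (L1 ++ LP). intros E [HE|(b & p & Hb & R & Hp & Hin)].
  - apply in_or_app. left. auto.
  - apply in_or_app. right. eapply HLP; eauto. apply in_or_app.
    destruct Hb as [Hb|(F & HF1 & HF2 & ->)]; [left; auto|right; apply in_map; auto].
Qed.

Lemma core_exists : exists SV SE l, H_inv_subtree A H SV SE /\ cover A H SE l.
Proof.
  destruct Zfin as (LZ & HLZ).
  assert (Hc : forall LZ0, exists l, forall e, SEc e -> In (pE e) LZ0 ->
    exists e0, In e0 l /\ SEc e0 /\ exists h, H h /\ actE A h e0 = e).
  { induction LZ0 as [|X LZ0 IH].
    - exists []. intros e _ [].
    - destruct IH as (l & Hl).
      destruct (classic (exists e1, SEc e1 /\ pE e1 = X)) as [(e1 & He1 & <-)|N].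
      + exists (e1 :: l). intros e He [Hx|Hx].
        * exists e1. split; [left; auto|]. split; auto. apply (piE_eq A hH). exact Hx.
        * destruct (Hl e He Hx) as (e0 & H1 & H2). exists e0. split; [right; auto| auto].
      + exists l. intros e He [Hx|Hx]; [exfalso; apply N; eauto|]. apply Hl; auto. }
  destruct (Hc LZ) as (l & Hl).
  exists SVc, SEc, l. split; [exact S_inv|]. intros e He. apply Hl; auto.
Qed.

End Core.
From Stdlib Require Import List Classical.

Theorem lemma2p3 (G : group) (T : graph) (A : action G T)
  (hT : is_tree T) (hinv : without_inversions A)
  (H : G -> Prop) (hH : subgroup H) (hfree : acts_freely_on_edges A H)
  (hK : Kurosh_rank_finite A H) :
  tame A H.
Proof.
  destruct (classic (exists h, H h /\ hyperbolic A h)) as [Hyp|NHyp].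
  - right. split; [exact Hyp|].
    destruct (hK Hyp) as ((SVq & SEq & Hmax & (L1 & HL1)) & (L2 & HL2)).
    pose proof Hmax as ((_ & (base & Hbase) & _) & _).
    apply (minimize hH Hyp).
    exact (core_exists hT hH hfree Hmax Hbase HL1 HL2).
  - left. apply (serre_fix hT hH hfree). intros h Hh Hy. apply NHyp. eauto.
Qed.
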